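(* Let $(X_n)_{n\ge0}$ be a Bienaym\'e--Galton--Watson branching process with $X_0=1$ and offspring distribution $\mathrm{Bin}(n_0,1/n_0)$, $n_0\ge2$, and let $Y_n=\sum_{k=0}^nX_k$. There exist constants $c_1,c_2$ (not depending on $n_0$) such that for all $n\ge1$ and $\lambda>0$, $$P(X_n[n]\ge\lambda n)\le c_1e^{-\lambda/6},\qquad P(Y_n[n]\ge\lambda n^2)\le c_2e^{-\lambda/5}.$$
   Context: For a random variable $\xi$ and integer $n\ge1$, $\xi[n]$ denotes a random variable distributed as $\sum_{i=1}^n\xi_i$ where $\xi_1,\dots,\xi_n$ are i.i.d. copies of $\xi$. *)

(* Defs.v *)
From Stdlib Require Import Reals Arith.
From Coquelicot Require Import Coquelicot.
Open Scope R_scope.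

(* A probability law on nat is represented by its mass function nat -> R. *)

Definition offspring (n0 : nat) (k : nat) : R :=
  if (k <=? n0)%nat then
    Binomial.C n0 k * (1 / INR n0) ^ k * (1 - 1 / INR n0) ^ (n0 - k)
  else 0.

Definition conv (p q : nat -> R) (k : nat) : R :=
  sum_f_R0 (fun i => p i * q (k - i)%nat) k.

Definition dirac0 (k : nat) : R := if (k =? 0)%nat then 1 else 0.

(* convpow p m = law of xi_1 + ... + xi_m, xi_i iid with law p
   (so convpow p m is the law of xi[m]; convpow p 0 = dirac at 0). *)
Fixpoint convpow (p : nat -> R) (m : nat) : nat -> R :=
  match m with
  | O => dirac0
  | S m' => conv p (convpow p m')
  end.

Definition bgw_kernel (n0 x1 : nat) : nat -> R := convpow (offspring n0) x1.

(* joint n0 k x y = P(X_k = x, Y_k = y), where X_0 = 1, Y_k = X_0 + ... + X_k.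
   Recursion: Y_{k+1} = Y_k + X_{k+1}, and X_{k+1} given X_k = x1 has law
   bgw_kernel n0 x1 (law of total probability over x1). *)
Fixpoint joint (n0 k : nat) (x y : nat) : R :=
  match k with
  | O => if ((x =? 1) && (y =? 1))%bool then 1 else 0
  | S k' =>
      if (x <=? y)%nat then
        Series (fun x1 => joint n0 k' x1 (y - x)%nat * bgw_kernel n0 x1 x)
      else 0
  end.

Definition lawX (n0 n : nat) (x : nat) : R := Series (fun y => joint n0 n x y).
Definition lawY (n0 n : nat) (y : nat) : R := Series (fun x => joint n0 n x y).

Definition tail (p : nat -> R) (t : R) : R :=
  Series (fun k => if Rle_dec t (INR k) then p k else 0).

(* Main.v *)
Require Import Defs.
From Stdlib Require Import Reals Arith.
From Coquelicot Require Import Coquelicot.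
From Stdlib Require Import Lia Lra.
Open Scope R_scope.


Definition fs (a : nat -> R) (N : nat) := forall k, (N < k)%nat -> a k = 0.

Lemma sum_ext_zero a N n : fs a N -> (N <= n)%nat -> sum_f_R0 a n = sum_f_R0 a N.
Proof.
  intros H Hn. induction Hn as [|n Hn IH]; auto.
  simpl. rewrite IH, (H (S n)) by lia. ring.
Qed.

Lemma fs_is_series a N : fs a N -> is_series a (sum_f_R0 a N).
Proof.
  intros H. unfold is_series.
  apply (filterlim_ext_loc (fun _ => sum_f_R0 a N)).
  - exists N. intros n Hn. rewrite sum_n_Reals. symmetry. apply sum_ext_zero; auto.
  - apply filterlim_const.
Qed.

Lemma fs_Series a N : fs a N -> Series a = sum_f_R0 a N.
Proof. intros H. apply is_series_unique, fs_is_series, H. Qed.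

Lemma fs_ex a N : fs a N -> ex_series a.
Proof. intros H. eexists. apply fs_is_series, H. Qed.

Lemma sum_zero a N : (forall k, (k <= N)%nat -> a k = 0) -> sum_f_R0 a N = 0.
Proof.
  intros H. induction N; simpl. apply H; lia.
  rewrite IHN by (intros; apply H; lia). rewrite H by lia. ring.
Qed.

Lemma Series_zero a : (forall k, a k = 0) -> Series a = 0.
Proof.
  intros H. rewrite (fs_Series a 0). simpl. apply H. intros k _. apply H.
Qed.

Lemma sum_swap (a : nat -> nat -> R) N M :
  sum_f_R0 (fun x => sum_f_R0 (fun y => a x y) M) N =
  sum_f_R0 (fun y => sum_f_R0 (fun x => a x y) N) M.
Proof.
  induction M; simpl. reflexivity.
  rewrite sum_plus. rewrite IHM. reflexivity.
Qed.

Lemma Series_swap (a : nat -> nat -> R) N :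
  (forall x y, (N < x)%nat \/ (N < y)%nat -> a x y = 0) ->
  Series (fun x => Series (fun y => a x y)) = Series (fun y => Series (fun x => a x y)).
Proof.
  intros H.
  rewrite (Series_ext _ (fun x => sum_f_R0 (fun y => a x y) N)).
  2:{ intros x. apply fs_Series. intros k Hk. apply H. lia. }
  rewrite (Series_ext (fun y => Series _) (fun y => sum_f_R0 (fun x => a x y) N)).
  2:{ intros y. apply fs_Series. intros k Hk. apply H. lia. }
  rewrite (fs_Series _ N), (fs_Series (fun y => sum_f_R0 _ N) N).
  - apply sum_swap.
  - intros k Hk. apply sum_zero. intros; apply H; lia.
  - intros k Hk. apply sum_zero. intros; apply H; lia.
Qed.

Lemma Series_shift (g : nat -> R) x :
  Series (fun y => if (x <=? y)%nat then g (y - x)%nat else 0) = Series g.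
Proof.
  rewrite (Series_incr_n_aux _ x).
  - apply Series_ext. intros k. rewrite (proj2 (Nat.leb_le x (x + k))) by lia.
    f_equal. lia.
  - intros k Hk. destruct (Nat.leb_spec x k); [lia | reflexivity].
Qed.

Lemma Series_nonneg a N : fs a N -> (forall k, 0 <= a k) -> 0 <= Series a.
Proof. intros H Hp. rewrite (fs_Series a N H). apply cond_pos_sum, Hp. Qed.

Definition GF (p : nat -> R) (z : R) := Series (fun k => p k * z ^ k).

Lemma GF_fs p N z : fs p N -> fs (fun k => p k * z ^ k) N.
Proof. intros H k Hk. rewrite H by auto. ring. Qed.

Lemma conv_fs p q a b : fs p a -> fs q b -> fs (conv p q) (a + b).
Proof.
  intros Hp Hq k Hk. unfold conv. apply sum_zero. intros i Hi.
  destruct (Nat.le_gt_cases i a).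
  - rewrite (Hq (k - i)%nat) by lia. ring.
  - rewrite Hp by lia. ring.
Qed.

Lemma conv_nonneg p q : (forall k, 0 <= p k) -> (forall k, 0 <= q k) -> forall k, 0 <= conv p q k.
Proof. intros Hp Hq k. unfold conv. apply cond_pos_sum. intros; apply Rmult_le_pos; auto. Qed.

Lemma GF_conv p q a b z : fs p a -> fs q b -> GF (conv p q) z = GF p z * GF q z.
Proof.
  intros Hp Hq. unfold GF.
  rewrite (Series_ext _ (fun n => sum_f_R0 (fun k => (p k * z ^ k) * (q (n - k)%nat * z ^ (n - k))) n)).
  - apply is_series_unique. apply (is_series_mult (fun k => p k * z ^ k) (fun k => q k * z ^ k)).
    + apply Series_correct. eapply fs_ex, GF_fs, Hp.
    + apply Series_correct. eapply fs_ex, GF_fs, Hq.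
    + apply (fs_ex _ a). intros k Hk. rewrite Hp by auto. rewrite Rmult_0_l. apply Rabs_R0.
    + apply (fs_ex _ b). intros k Hk. rewrite Hq by auto. rewrite Rmult_0_l. apply Rabs_R0.
  - intros n. unfold conv. rewrite Rmult_comm, scal_sum. apply sum_eq. intros i Hi.
    assert (z ^ n = z ^ i * z ^ (n - i)) as E by (rewrite <- pow_add; f_equal; lia).
    rewrite E. ring.
Qed.

Lemma dirac0_fs : fs dirac0 0.
Proof. intros k Hk. unfold dirac0. destruct k; [lia|reflexivity]. Qed.

Lemma convpow_fs p b m : fs p b -> fs (convpow p m) (m * b).
Proof.
  intros H. induction m; simpl. apply dirac0_fs.
  apply conv_fs; auto.
Qed.

Lemma convpow_nonneg p m : (forall k, 0 <= p k) -> forall k, 0 <= convpow p m k.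
Proof.
  intros H. induction m; simpl.
  - intros k. unfold dirac0. destruct (k =? 0)%nat; lra.
  - apply conv_nonneg; auto.
Qed.

Lemma GF_convpow p b m z : fs p b -> GF (convpow p m) z = GF p z ^ m.
Proof.
  intros H. induction m; simpl.
  - unfold GF. rewrite (fs_Series _ 0). simpl. unfold dirac0; simpl. ring.
    apply GF_fs, dirac0_fs.
  - rewrite (GF_conv _ _ b (m * b)); auto. rewrite IHm. reflexivity.
    apply convpow_fs, H.
Qed.

Definition fgen (n0 : nat) (t : R) := (t / INR n0 + (1 - 1 / INR n0)) ^ n0.

Lemma offspring_fs n0 : fs (offspring n0) n0.
Proof.
  intros k Hk. unfold offspring. destruct (Nat.leb_spec k n0); [lia|reflexivity].
Qed.

Lemma C_nonneg n k : 0 <= Binomial.C n k.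
Proof.
  unfold Binomial.C. apply Rmult_le_pos; [apply pos_INR|].
  apply Rlt_le, Rinv_0_lt_compat, Rmult_lt_0_compat; apply lt_0_INR, lt_O_fact.
Qed.

Lemma n0_facts n0 : (1 <= n0)%nat -> 0 < INR n0 /\ 0 <= 1 / INR n0 <= 1.
Proof.
  intros H. assert (1 <= INR n0) by (apply (le_INR 1); auto).
  split; [lra|]. split.
  - apply Rlt_le. unfold Rdiv. rewrite Rmult_1_l. apply Rinv_0_lt_compat. lra.
  - unfold Rdiv. rewrite Rmult_1_l. rewrite <- Rinv_1. apply Rinv_le_contravar; lra.
Qed.

Lemma offspring_nonneg n0 : (1 <= n0)%nat -> forall k, 0 <= offspring n0 k.
Proof.
  intros H k. destruct (n0_facts n0 H) as [_ [H1 H2]].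
  unfold offspring. destruct (k <=? n0)%nat; [|lra].
  apply Rmult_le_pos; [apply Rmult_le_pos; [apply C_nonneg| apply pow_le; lra] | apply pow_le; lra].
Qed.

Lemma GF_offspring n0 t : GF (offspring n0) t = fgen n0 t.
Proof.
  unfold GF, fgen. rewrite (fs_Series _ n0) by (apply GF_fs, offspring_fs).
  rewrite binomial. apply sum_eq. intros i Hi. unfold offspring.
  rewrite (proj2 (Nat.leb_le i n0) Hi).
  replace (t / INR n0) with (1 / INR n0 * t) by (unfold Rdiv; ring).
  rewrite Rpow_mult_distr. ring.
Qed.

Lemma exp_pow x n : exp x ^ n = exp (INR n * x).
Proof.
  induction n. simpl. rewrite Rmult_0_l, exp_0. reflexivity.
  change (exp x ^ S n) with (exp x * exp x ^ n).
  rewrite IHn, <- exp_plus, S_INR. f_equal. ring.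
Qed.

Lemma fgen_nonneg n0 t : (1 <= n0)%nat -> 0 <= t -> 0 <= fgen n0 t.
Proof.
  intros H Ht. destruct (n0_facts n0 H) as [H0 [H1 H2]]. unfold fgen.
  apply pow_le. assert (0 <= t / INR n0) by (unfold Rdiv; apply Rmult_le_pos; [lra| apply Rlt_le, Rinv_0_lt_compat; lra]).
  lra.
Qed.

Lemma fgen_exp n0 t : (1 <= n0)%nat -> 0 <= t -> fgen n0 t <= exp (t - 1).
Proof.
  intros H Ht. destruct (n0_facts n0 H) as [H0 [H1 H2]]. unfold fgen.
  assert (E : t - 1 = INR n0 * ((t - 1) / INR n0)) by (field; lra).
  rewrite E, <- exp_pow. apply pow_incr. split.
  - assert (0 <= t / INR n0) by (unfold Rdiv; apply Rmult_le_pos; [lra| apply Rlt_le, Rinv_0_lt_compat; lra]).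
    lra.
  - replace (t / INR n0 + (1 - 1 / INR n0)) with (1 + (t - 1) / INR n0) by (field; lra).
    apply exp_ineq1_le.
Qed.

Lemma exp_inv_bound v : exp v * (1 - v) <= 1.
Proof.
  pose proof (exp_ineq1_le (- v)). pose proof (exp_pos v).
  replace 1 with (exp v * exp (- v)) at 2 by (rewrite <- exp_plus; replace (v + - v) with 0 by ring; apply exp_0).
  apply Rmult_le_compat_l; lra.
Qed.

Lemma fstep n0 s p : (1 <= n0)%nat -> 0 <= s -> 1 < p -> s - 1 <= 1 / p ->
  fgen n0 s <= 1 + 1 / (p - 1).
Proof.
  intros H Hs Hp Hsp. eapply Rle_trans. apply fgen_exp; auto.
  pose proof (exp_inv_bound (s - 1)). pose proof (exp_pos (s - 1)).
  set (e := exp (s - 1)) in *.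
  assert (e * (1 - 1 / p) <= 1).
  { eapply Rle_trans; [|apply H0]. apply Rmult_le_compat_l; lra. }
  replace (1 + 1 / (p - 1)) with (1 / (1 - 1/p)) by (field; lra).
  assert (0 < 1 - 1 / p).
  { assert (1 / p < 1). { apply (Rmult_lt_reg_r p); [lra|]. field_simplify; lra. } lra. }
  apply (Rmult_le_reg_r (1 - 1/p)); auto. replace (1 / (1 - 1 / p) * (1 - 1 / p)) with 1 by (field; lra). lra.
Qed.

Definition B (n0 k : nat) : nat := ((n0 + 1) ^ k)%nat.

Lemma B_S n0 k : B n0 (S k) = (B n0 k + B n0 k * n0)%nat.
Proof. unfold B. rewrite Nat.pow_succ_r'. lia. Qed.

Lemma kernel_fs n0 x1 : fs (bgw_kernel n0 x1) (x1 * n0).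
Proof. apply convpow_fs, offspring_fs. Qed.

Lemma joint_S n0 k x y : joint n0 (S k) x y =
  if (x <=? y)%nat then Series (fun x1 => joint n0 k x1 (y - x)%nat * bgw_kernel n0 x1 x) else 0.
Proof. reflexivity. Qed.

Lemma joint_supp n0 k : forall x y, (B n0 k < x)%nat \/ (B n0 k < y)%nat -> joint n0 k x y = 0.
Proof.
  induction k; intros x y Hxy.
  - simpl. unfold B in Hxy; simpl in Hxy.
    destruct (Nat.eqb_spec x 1); destruct (Nat.eqb_spec y 1); simpl; auto; lia.
  - rewrite joint_S. destruct (Nat.leb_spec x y); auto.
    apply Series_zero. intros x1.
    destruct (Nat.le_gt_cases x1 (B n0 k)).
    2:{ rewrite IHk by lia. ring. }
    destruct (Nat.le_gt_cases x (x1 * n0)).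
    2:{ rewrite (kernel_fs n0 x1 x) by lia. ring. }
    assert (x1 * n0 <= B n0 k * n0)%nat by (apply Nat.mul_le_mono_r; auto).
    rewrite B_S in Hxy.
    rewrite IHk by lia. ring.
Qed.

Lemma joint_nonneg n0 k : (1 <= n0)%nat -> forall x y, 0 <= joint n0 k x y.
Proof.
  intros Hn. induction k; intros x y.
  - simpl. destruct (_ && _)%bool; lra.
  - rewrite joint_S. destruct (x <=? y)%nat; [|lra].
    apply (Series_nonneg _ (B n0 k)).
    + intros x1 Hx1. rewrite joint_supp by lia. ring.
    + intros x1. apply Rmult_le_pos; auto. apply convpow_nonneg, offspring_nonneg, Hn.
Qed.

Definition H (n0 k : nat) (z w : R) :=
  Series (fun x => Series (fun y => joint n0 k x y * z ^ x * w ^ y)).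

Fixpoint A (n0 : nat) (w : R) (k : nat) (z : R) : R :=
  match k with
  | O => z
  | S k' => A n0 w k' (fgen n0 (z * w))
  end.

Lemma H_0 n0 z w : H n0 0 z w = z * w.
Proof.
  unfold H.
  rewrite (Series_ext _ (fun x => if (x =? 1)%nat then z * w else 0)).
  - rewrite (fs_Series _ 1). simpl. ring.
    intros k Hk. destruct (Nat.eqb_spec k 1); [lia|auto].
  - intros x. rewrite (fs_Series _ 1).
    + destruct x as [|[|x]]; simpl; ring.
    + intros k Hk. simpl. destruct (x =? 1)%nat; simpl; [|ring].
      destruct (Nat.eqb_spec k 1); [lia|]. simpl. ring.
Qed.

Lemma H_step n0 k z w : H n0 (S k) z w = H n0 k (fgen n0 (z * w)) w.
Proof.
  set (N := B n0 (S k)).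
  assert (HBN : (B n0 k <= N)%nat) by (unfold N; rewrite B_S; lia).
  assert (HBN2 : (B n0 k * n0 <= N)%nat) by (unfold N; rewrite B_S; lia).
  set (Q := fun x1 => Series (fun y => joint n0 k x1 y * w ^ y)).
  assert (HQ : forall x1, (B n0 k < x1)%nat -> Q x1 = 0).
  { intros x1 Hx1. unfold Q. apply Series_zero. intros y. rewrite joint_supp by lia. ring. }
  unfold H.
  rewrite (Series_ext _ (fun x => Series (fun x1 => bgw_kernel n0 x1 x * (z * w) ^ x * Q x1))).
  2:{
    intros x.
    rewrite (Series_ext _ (fun y => Series (fun x1 =>
       if (x <=? y)%nat then joint n0 k x1 (y - x)%nat * bgw_kernel n0 x1 x * z ^ x * w ^ y else 0))).
    2:{ intros y. rewrite joint_S. destruct (x <=? y)%nat.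
        - rewrite Rmult_assoc, <- Series_scal_r. apply Series_ext. intros; ring.
        - rewrite Series_zero by auto. ring. }
    rewrite (Series_swap _ N).
    2:{ intros y x1 Hyx. destruct (Nat.leb_spec x y); auto.
        destruct (Nat.le_gt_cases x1 (B n0 k)).
        2:{ rewrite joint_supp by lia. ring. }
        destruct (Nat.le_gt_cases x (x1 * n0)).
        2:{ rewrite (kernel_fs n0 x1 x) by lia. ring. }
        assert (x1 * n0 <= B n0 k * n0)%nat by (apply Nat.mul_le_mono_r; auto).
        destruct (Nat.le_gt_cases (y - x) (B n0 k)).
        2:{ rewrite joint_supp by lia. ring. }
        unfold N in Hyx. rewrite B_S in Hyx. lia. }
    apply Series_ext. intros x1.
    rewrite (Series_ext _ (fun y => if (x <=? y)%nat then
        (fun y' => joint n0 k x1 y' * w ^ y' * (bgw_kernel n0 x1 x * (z * w) ^ x)) (y - x)%nat else 0)).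
    - rewrite (Series_shift (fun y' => joint n0 k x1 y' * w ^ y' * (bgw_kernel n0 x1 x * (z * w) ^ x)) x). rewrite Series_scal_r. unfold Q. ring.
    - intros y. destruct (Nat.leb_spec x y); auto.
      replace (w ^ y) with (w ^ x * w ^ (y - x)) by (rewrite <- pow_add; f_equal; lia).
      rewrite Rpow_mult_distr. ring. }
  rewrite (Series_swap _ N).
  2:{ intros x x1 Hx.
      destruct (Nat.le_gt_cases x1 (B n0 k)).
      2:{ rewrite HQ by lia. ring. }
      assert (x1 * n0 <= B n0 k * n0)%nat by (apply Nat.mul_le_mono_r; auto).
      rewrite (kernel_fs n0 x1 x) by lia. ring. }
  apply Series_ext. intros x1.
  rewrite (Series_ext _ (fun x => Q x1 * (bgw_kernel n0 x1 x * (z * w) ^ x))) by (intros; ring).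
  rewrite Series_scal_l.
  change (Series (fun x => bgw_kernel n0 x1 x * (z * w) ^ x)) with (GF (bgw_kernel n0 x1) (z * w)).
  unfold bgw_kernel. rewrite (GF_convpow _ n0) by apply offspring_fs.
  rewrite GF_offspring.
  rewrite (Series_ext _ (fun y => fgen n0 (z * w) ^ x1 * (joint n0 k x1 y * w ^ y))) by (intros; ring).
  rewrite Series_scal_l. unfold Q. ring.
Qed.

Lemma H_A n0 k : forall z w, H n0 k z w = w * A n0 w k z.
Proof.
  induction k; intros z w.
  - rewrite H_0. simpl. ring.
  - rewrite H_step, IHk. reflexivity.
Qed.

Lemma lawX_fs n0 n : fs (lawX n0 n) (B n0 n).
Proof. intros x Hx. unfold lawX. apply Series_zero. intros y. apply joint_supp. lia. Qed.

Lemma lawY_fs n0 n : fs (lawY n0 n) (B n0 n).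
Proof. intros y Hy. unfold lawY. apply Series_zero. intros x. apply joint_supp. lia. Qed.

Lemma lawX_nonneg n0 n : (1 <= n0)%nat -> forall x, 0 <= lawX n0 n x.
Proof.
  intros Hn x. unfold lawX. apply (Series_nonneg _ (B n0 n)).
  intros y Hy; apply joint_supp; lia. intros; apply joint_nonneg, Hn.
Qed.

Lemma lawY_nonneg n0 n : (1 <= n0)%nat -> forall y, 0 <= lawY n0 n y.
Proof.
  intros Hn y. unfold lawY. apply (Series_nonneg _ (B n0 n)).
  intros x Hx; apply joint_supp; lia. intros; apply joint_nonneg, Hn.
Qed.

Lemma GF_lawX n0 n z : GF (lawX n0 n) z = H n0 n z 1.
Proof.
  unfold GF, lawX, H. apply Series_ext. intros x. rewrite <- Series_scal_r.
  apply Series_ext. intros y. rewrite pow1. ring.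
Qed.

Lemma GF_lawY n0 n w : GF (lawY n0 n) w = H n0 n 1 w.
Proof.
  unfold GF, lawY, H.
  rewrite (Series_ext _ (fun y => Series (fun x => joint n0 n x y * 1 ^ x * w ^ y))).
  - symmetry. apply (Series_swap (fun x y => joint n0 n x y * 1 ^ x * w ^ y) (B n0 n)).
    intros x y Hxy. rewrite joint_supp by auto. ring.
  - intros y. rewrite <- Series_scal_r. apply Series_ext. intros x. rewrite pow1. ring.
Qed.

Lemma tail_bound p N th t : fs p N -> (forall k, 0 <= p k) -> 0 <= th ->
  tail p t <= exp (- (th * t)) * GF p (exp th).
Proof.
  intros Hf Hp Hth. unfold tail, GF.
  rewrite (fs_Series _ N).
  2:{ intros k Hk. rewrite Hf by auto. destruct (Rle_dec t (INR k)); auto. }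
  rewrite (fs_Series _ N) by (apply GF_fs, Hf).
  rewrite scal_sum. apply sum_Rle. intros k Hk.
  rewrite exp_pow, Rmult_assoc, <- exp_plus.
  pose proof (Hp k).
  destruct (Rle_dec t (INR k)).
  - rewrite <- (Rmult_1_r (p k)) at 1. apply Rmult_le_compat_l; auto.
    eapply Rle_trans; [|apply exp_ineq1_le].
    assert (0 <= th * (INR k - t)) by (apply Rmult_le_pos; lra). nra.
  - apply Rmult_le_pos; auto. apply Rlt_le, exp_pos.
Qed.

Lemma AX n0 : (1 <= n0)%nat -> forall k z m, 0 <= z -> INR k < m -> z <= 1 + 1 / m ->
  A n0 1 k z <= 1 + 1 / (m - INR k).
Proof.
  intros Hn k. induction k; intros z m Hz Hkm Hzm.
  - simpl. rewrite Rminus_0_r. auto.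
  - simpl A. rewrite S_INR in *.
    replace (m - (INR k + 1)) with ((m - 1) - INR k) by ring.
    pose proof (pos_INR k).
    apply IHk.
    + apply fgen_nonneg; auto. lra.
    + lra.
    + apply fstep; auto; lra.
Qed.

Lemma AY n0 n w : (1 <= n0)%nat -> 1 <= w -> 0 < INR n ->
  (w - 1) * (5 * INR n ^ 2 - 1) <= 1 ->
  forall k z m, 0 <= z -> z <= 1 + 1 / m -> m <= 11 * INR n / 5 -> 2 * INR k + INR n / 5 <= m ->
  A n0 w k z <= 1 + 1 / (m - 2 * INR k).
Proof.
  intros Hn0 Hw Hn Hd k. induction k; intros z m Hz Hzm Hm1 Hm2.
  - simpl. replace (m - 2 * 0) with m by ring. auto.
  - simpl A. rewrite S_INR in *. pose proof (pos_INR k).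
    replace (m - 2 * (INR k + 1)) with ((m - 2) - 2 * INR k) by ring.
    apply IHk; try lra.
    + apply fgen_nonneg; auto. nra.
    + replace (m - 2) with ((m - 1) - 1) by ring. apply fstep; auto. nra. lra.
      assert (Hm : 2 < m) by lra.
      set (d := w - 1) in *.
      assert (m * m <= (11 * INR n / 5) * (11 * INR n / 5)) by (apply Rmult_le_compat; lra).
      assert (m * m <= 5 * INR n ^ 2) by (simpl; nra).
      assert (d * (m * m - 1) <= d * (5 * INR n ^ 2 - 1)) by (apply Rmult_le_compat_l; unfold d; lra).
      assert (d * (m * m - 1) <= 1) by lra.
      assert (z * w <= (1 + 1 / m) * w) by (apply Rmult_le_compat_r; lra).
      replace w with (1 + d) in * by (unfold d; ring).
      assert ((1 + 1 / m) * (1 + d) - 1 <= 1 / (m - 1)).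
      { apply (Rmult_le_reg_r (m * (m - 1))). nra.
        field_simplify; try lra. }
      lra.
Qed.

Lemma pow_exp_bound u n : 0 <= u -> (1 + u) ^ n <= exp (INR n * u).
Proof.
  intros Hu. rewrite <- exp_pow. apply pow_incr. split. lra. apply exp_ineq1_le.
Qed.

Lemma exp_le a b : a <= b -> exp a <= exp b.
Proof. intros [H|H]. apply Rlt_le, exp_increasing, H. subst; lra. Qed.

Lemma exp_small th : 0 <= th < 1 -> exp th <= 1 / (1 - th).
Proof.
  intros H. pose proof (exp_inv_bound th).
  apply (Rmult_le_reg_r (1 - th)). lra.
  replace (1 / (1 - th) * (1 - th)) with 1 by (field; lra). lra.
Qed.

Lemma GF_nonneg p N z : fs p N -> (forall k, 0 <= p k) -> 0 <= z -> 0 <= GF p z.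
Proof.
  intros Hf Hp Hz. unfold GF. apply (Series_nonneg _ N). apply GF_fs, Hf.
  intros k. apply Rmult_le_pos; auto. apply pow_le, Hz.
Qed.

Theorem lemma2p2 :
  exists c1 c2 : R,
    forall n0 : nat, (2 <= n0)%nat ->
    forall n : nat, (1 <= n)%nat ->
    forall lam : R, 0 < lam ->
      tail (convpow (lawX n0 n) n) (lam * INR n) <= c1 * exp (- lam / 6) /\
      tail (convpow (lawY n0 n) n) (lam * INR n ^ 2) <= c2 * exp (- lam / 5).
Proof.
  exists (exp 1), (exp 6). intros n0 Hn0 n Hn lam Hlam.
  assert (H1 : (1 <= n0)%nat) by lia.
  assert (Hnr : 1 <= INR n) by (apply (le_INR 1); auto).
  split.
  - set (th := 1 / (6 * INR n)).
    assert (Hth : 0 <= th < 1).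
    { unfold th. split. apply Rlt_le, Rdiv_lt_0_compat; lra.
      apply (Rmult_lt_reg_r (6 * INR n)). lra. field_simplify; lra. }
    eapply Rle_trans.
    { apply (tail_bound _ (n * B n0 n) th).
      apply convpow_fs, lawX_fs. apply convpow_nonneg, lawX_nonneg, H1. lra. }
    rewrite (GF_convpow _ (B n0 n)) by apply lawX_fs.
    assert (G0 : 0 <= GF (lawX n0 n) (exp th)).
    { apply (GF_nonneg _ (B n0 n)). apply lawX_fs. apply lawX_nonneg, H1. apply Rlt_le, exp_pos. }
    rewrite GF_lawX, H_A, Rmult_1_l in *.
    assert (HA : A n0 1 n (exp th) <= 1 + 1 / (6 * INR n - 1 - INR n)).
    { apply AX; auto. apply Rlt_le, exp_pos. lra.
      eapply Rle_trans. apply exp_small; auto.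
      unfold th. right. field. lra. }
    assert (Hpow : A n0 1 n (exp th) ^ n <= exp 1).
    { eapply Rle_trans. apply pow_incr. split; [apply G0|apply HA].
      eapply Rle_trans. apply pow_exp_bound.
      apply Rlt_le, Rdiv_lt_0_compat; lra.
      apply exp_le. apply (Rmult_le_reg_r (6 * INR n - 1 - INR n)). lra.
      field_simplify; lra. }
    replace (- (th * (lam * INR n))) with (- lam / 6) by (unfold th; field; lra).
    rewrite Rmult_comm. apply Rmult_le_compat_r. apply Rlt_le, exp_pos. auto.
  - set (th := 1 / (5 * INR n ^ 2)).
    assert (Hn2 : 1 <= INR n ^ 2) by (simpl; nra).
    assert (Hth : 0 <= th < 1).
    { unfold th. split. apply Rlt_le, Rdiv_lt_0_compat; lra.
      apply (Rmult_lt_reg_r (5 * INR n ^ 2)). lra. field_simplify; lra. }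
    eapply Rle_trans.
    { apply (tail_bound _ (n * B n0 n) th).
      apply convpow_fs, lawY_fs. apply convpow_nonneg, lawY_nonneg, H1. lra. }
    rewrite (GF_convpow _ (B n0 n)) by apply lawY_fs.
    assert (G0 : 0 <= GF (lawY n0 n) (exp th)).
    { apply (GF_nonneg _ (B n0 n)). apply lawY_fs. apply lawY_nonneg, H1. apply Rlt_le, exp_pos. }
    rewrite GF_lawY, H_A in *.
    set (w := exp th) in *.
    assert (Hw1 : 1 <= w).
    { unfold w. pose proof (exp_ineq1_le th). lra. }
    assert (Hwd : (w - 1) * (5 * INR n ^ 2 - 1) <= 1).
    { pose proof (exp_inv_bound th) as Hei. fold w in Hei.
      replace (5 * INR n ^ 2 - 1) with ((1 - th) * (5 * INR n ^ 2)) by (unfold th; field; lra).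
      replace 1 with (th * (5 * INR n ^ 2)) at 3 by (unfold th; field; lra).
      rewrite <- Rmult_assoc. apply Rmult_le_compat_r. lra. nra. }
    assert (HA : A n0 w n 1 <= 1 + 1 / (11 * INR n / 5 - 2 * INR n)).
    { apply (AY n0 n w); auto; try lra.
      assert (0 <= 1 / (11 * INR n / 5)) by (apply Rlt_le, Rdiv_lt_0_compat; lra). lra. }
    replace (1 + 1 / (11 * INR n / 5 - 2 * INR n)) with (1 + 5 / INR n) in HA by (field; lra).
    assert (Hpow : (w * A n0 w n 1) ^ n <= exp 6).
    { eapply Rle_trans. apply pow_incr. split; [apply G0|].
      apply Rmult_le_compat_l. lra. apply HA.
      rewrite Rpow_mult_distr. unfold w. rewrite exp_pow.
      replace 6 with (1 + 5) by ring. rewrite exp_plus.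
      apply Rmult_le_compat. apply Rlt_le, exp_pos. apply pow_le.
      assert (0 < 5 / INR n) by (apply Rdiv_lt_0_compat; lra). lra.
      apply exp_le. unfold th. apply (Rmult_le_reg_r (5 * INR n ^ 2)). lra.
      field_simplify; try lra. simpl. nra.
      eapply Rle_trans. apply pow_exp_bound.
      apply Rlt_le, Rdiv_lt_0_compat; lra.
      apply exp_le. right. field. lra. }
    replace (- (th * (lam * INR n ^ 2))) with (- lam / 5) by (unfold th; field; lra).
    rewrite Rmult_comm. apply Rmult_le_compat_r. apply Rlt_le, exp_pos. auto.
Qed.
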